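(* Let $I\in\{0,1\}^{n\times m}$ be clarified. Then $\mathcal{E}(I)$ is an essential part of $I$, and it is the unique essential part of $I$: i.e. $\mathcal{E}(I)\leq I$, for every $\mathcal{F}\subseteq\mathcal{B}(I)$ the condition $\mathcal{E}(I)\leq A_{\mathcal{F}}\circ B_{\mathcal{F}}$ implies $I=A_{\mathcal{F}}\circ B_{\mathcal{F}}$, and every $J\leq I$ with this same property satisfies $\mathcal{E}(I)\leq J$.
   Context: $I\in\{0,1\}^{n\times m}$, $X=\{1,\dots,n\}$, $Y=\{1,\dots,m\}$. $I$ is clarified if it has no two identical rows and no two identical columns. For matrices, $J_1\leq J_2$ means entrywise $\leq$. For $C\subseteq X$, $D\subseteq Y$: $C^{\uparrow}=\{j\in Y\mid \forall i\in C: I_{ij}=1\}$, $D^{\downarrow}=\{i\in X\mid \forall j\in D: I_{ij}=1\}$. $\mathcal{B}(I)=\{\langle C,D\rangle\mid C^\uparrow=D, D^\downarrow=C\}$ with order $\langle C_1,D_1\rangle\leq\langle C_2,D_2\rangle$ iff $C_1\subseteq C_2$. $\gamma(i)=\langle\{i\}^{\uparrow\downarrow},\{i\}^{\uparrow}\rangle$, $\mu(j)=\langle\{j\}^{\downarrow},\{j\}^{\downarrow\uparrow}\rangle$, and $\mathcal{I}_{ij}=\{c\in\mathcal{B}(I)\mid \gamma(i)\leq c\leq\mu(j)\}$. $\mathcal{E}(I)\in\{0,1\}^{n\times m}$ is defined by $\mathcal{E}(I)_{ij}=1$ iff $\mathcal{I}_{ij}$ is non-empty and minimal w.r.t. $\subseteq$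 among the non-empty sets $\mathcal{I}_{i'j'}$ ($i'\in X$, $j'\in Y$). Boolean product: $(A\circ B)_{ij}=\max_l\min(A_{il},B_{lj})$. For $\mathcal{F}=\{\langle C_1,D_1\rangle,\dots,\langle C_p,D_p\rangle\}\subseteq\mathcal{B}(I)$, $(A_{\mathcal{F}})_{il}=1$ iff $i\in C_l$, $(B_{\mathcal{F}})_{lj}=1$ iff $j\in D_l$. A matrix $J\leq I$ is an essential part of $I$ if for every $\mathcal{F}\subseteq\mathcal{B}(I)$, $J\leq A_{\mathcal{F}}\circ B_{\mathcal{F}}$ implies $I=A_{\mathcal{F}}\circ B_{\mathcal{F}}$, and $J$ is minimal w.r.t. $\leq$ among matrices $J'\leq I$ with this property. *)

(* Defs.v *)
From mathcomp Require Import all_boot all_order all_algebra.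
Set Implicit Arguments. Unset Strict Implicit. Unset Printing Implicit Defensive.

Section FCA.
Variables (n m : nat).
Implicit Types (I J : 'M[bool]_(n, m)).

Definition mxle I J : Prop := forall i j, I i j ==> J i j.

Definition clarified I : Prop :=
  (forall i i' : 'I_n, (forall j, I i j = I i' j) -> i = i') /\
  (forall j j' : 'I_m, (forall i, I i j = I i j') -> j = j').

Definition up I (C : {set 'I_n}) : {set 'I_m} := [set j | [forall i in C, I i j]].
Definition down I (D : {set 'I_m}) : {set 'I_n} := [set i | [forall j in D, I i j]].

Definition concept := ({set 'I_n} * {set 'I_m})%type.

Definition concepts I : {set concept} :=
  [set c : concept | (up I c.1 == c.2) && (down I c.2 == c.1)].

Definition cle (c1 c2 : concept) : bool := c1.1 \subset c2.1.

Definition gamma I (i : 'I_n) : concept := (down I (up I [set i]), up I [set i]).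
Definition mu I (j : 'I_m) : concept := (down I [set j], up I (down I [set j])).

Definition interval I (i : 'I_n) (j : 'I_m) : {set concept} :=
  [set c in concepts I | cle (gamma I i) c && cle c (mu I j)].

Definition Emx I : 'M[bool]_(n, m) :=
  \matrix_(i, j) ((interval I i j != set0) &&
     [forall i', forall j', (interval I i' j' != set0) ==>
                              ~~ (interval I i' j' \proper interval I i j)]).

Definition bprod (p : nat) (A : 'M[bool]_(n, p)) (B : 'M[bool]_(p, m)) : 'M[bool]_(n, m) :=
  \matrix_(i, j) [exists l, A i l && B l j].

(* A_F and B_F, the concepts of F being indexed by 'I_#|F| via enum_val *)
Definition AF (F : {set concept}) : 'M[bool]_(n, #|F|) :=
  \matrix_(i < n, l < #|F|) (i \in (@enum_val _ F l : concept).1).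
Definition BF (F : {set concept}) : 'M[bool]_(#|F|, m) :=
  \matrix_(l < #|F|, j < m) (j \in (@enum_val _ F l : concept).2).

Definition covers_all I J : Prop :=
  forall F : {set concept}, F \subset concepts I ->
    mxle J (bprod (AF F) (BF F)) -> I = bprod (AF F) (BF F).

Definition essential_part I J : Prop :=
  mxle J I /\ covers_all I J /\
  (forall J', mxle J' I -> covers_all I J' -> mxle J' J -> J' = J).

End FCA.

(* Main.v *)
Require Import Defs.
From mathcomp Require Import all_boot all_order all_algebra.
Set Implicit Arguments. Unset Strict Implicit. Unset Printing Implicit Defensive.

Lemma up_anti n m (I : 'M[bool]_(n, m)) (C1 C2 : {set 'I_n}) :
  C1 \subset C2 -> up I C2 \subset up I C1.
Proof.
move=> /subsetP s; apply/subsetP => j; rewrite !inE => /forall_inP h.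
by apply/forall_inP => i /s; apply: h.
Qed.

Lemma down_anti n m (I : 'M[bool]_(n, m)) (D1 D2 : {set 'I_m}) :
  D1 \subset D2 -> down I D2 \subset down I D1.
Proof.
move=> /subsetP s; apply/subsetP => i; rewrite !inE => /forall_inP h.
by apply/forall_inP => j /s; apply: h.
Qed.

Lemma sub_down_up n m (I : 'M[bool]_(n, m)) (C : {set 'I_n}) :
  C \subset down I (up I C).
Proof.
apply/subsetP => i iC; rewrite inE; apply/forall_inP => j.
by rewrite inE => /forall_inP; apply.
Qed.

Lemma sub_up_down n m (I : 'M[bool]_(n, m)) (D : {set 'I_m}) :
  D \subset up I (down I D).
Proof.
apply/subsetP => j jD; rewrite inE; apply/forall_inP => i.
by rewrite inE => /forall_inP; apply.
Qed.

Lemma up_down_up n m (I : 'M[bool]_(n, m)) (C : {set 'I_n}) :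
  up I (down I (up I C)) = up I C.
Proof.
apply/eqP; rewrite eqEsubset sub_up_down andbT.
exact/up_anti/sub_down_up.
Qed.

Lemma down_up_down n m (I : 'M[bool]_(n, m)) (D : {set 'I_m}) :
  down I (up I (down I D)) = down I D.
Proof.
apply/eqP; rewrite eqEsubset sub_down_up andbT.
exact/down_anti/sub_up_down.
Qed.

Lemma gamma_concept n m (I : 'M[bool]_(n, m)) i : gamma I i \in concepts I.
Proof. by rewrite inE /= up_down_up !eqxx. Qed.

Lemma mu_concept n m (I : 'M[bool]_(n, m)) j : mu I j \in concepts I.
Proof. by rewrite inE /= down_up_down !eqxx. Qed.

Lemma concept1 n m (I : 'M[bool]_(n, m)) (c : concept n m) :
  c \in concepts I -> up I c.1 = c.2 /\ down I c.2 = c.1.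
Proof. by rewrite inE => /andP[/eqP -> /eqP ->]. Qed.

Lemma cle_gamma n m (I : 'M[bool]_(n, m)) i (c : concept n m) :
  c \in concepts I -> cle (gamma I i) c = (i \in c.1).
Proof.
move=> /concept1 [e1 e2]; rewrite /cle /=; apply/idP/idP.
  by move/subsetP; apply; move/subsetP: (sub_down_up I [set i]); apply; rewrite inE.
move=> ic; rewrite -e2 -e1; apply/down_anti/up_anti.
by apply/subsetP => k; rewrite inE => /eqP ->.
Qed.

Lemma cle_mu n m (I : 'M[bool]_(n, m)) j (c : concept n m) :
  c \in concepts I -> cle c (mu I j) = (j \in c.2).
Proof.
move=> /concept1 [e1 e2]; rewrite /cle /=; apply/idP/idP.
  move=> /(up_anti I) /subsetP; rewrite e1; apply.
  by move/subsetP: (sub_up_down I [set j]); apply; rewrite inE.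
move=> jc; rewrite -e2; apply/down_anti.
by apply/subsetP => k; rewrite inE => /eqP ->.
Qed.

Lemma in_interval n m (I : 'M[bool]_(n, m)) i j (c : concept n m) :
  (c \in Defs.interval I i j) = [&& c \in concepts I, i \in c.1 & j \in c.2].
Proof.
rewrite inE; case cC: (c \in concepts I) => //=.
by rewrite cle_gamma // cle_mu.
Qed.

Lemma concept_entry n m (I : 'M[bool]_(n, m)) i j (c : concept n m) :
  c \in concepts I -> i \in c.1 -> j \in c.2 -> I i j.
Proof.
move=> /concept1 [_ e2]; rewrite -e2 inE => /forall_inP h; exact: h.
Qed.

Lemma interval_nonempty n m (I : 'M[bool]_(n, m)) i j :
  (Defs.interval I i j != set0) = I i j.
Proof.
apply/set0Pn/idP.
  by case=> c; rewrite in_interval => /and3P[]; apply: concept_entry.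
move=> Iij; exists (gamma I i); rewrite in_interval gamma_concept /=.
rewrite (subsetP (sub_down_up I [set i])) ?inE ?eqxx //=.
by apply/forall_inP => k; rewrite inE => /eqP ->.
Qed.

Lemma bprod_entry n m (F : {set concept n m}) i j :
  bprod (AF F) (BF F) i j = [exists c in F, (i \in c.1) && (j \in c.2)].
Proof.
rewrite mxE; apply/existsP/existsP.
  by case=> l; rewrite !mxE => h; exists (enum_val l); rewrite enum_valP.
case=> c /andP[cF h]; exists (enum_rank_in cF c).
by rewrite !mxE enum_rankK_in.
Qed.

Lemma Emx_entry n m (I : 'M[bool]_(n, m)) i j :
  Emx I i j = (Defs.interval I i j != set0) &&
     [forall i', forall j', (Defs.interval I i' j' != set0) ==>
                              ~~ (Defs.interval I i' j' \proper Defs.interval I i j)].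
Proof. by rewrite mxE. Qed.

Lemma Emx_le n m (I : 'M[bool]_(n, m)) : mxle (Emx I) I.
Proof.
by move=> i j; rewrite Emx_entry -interval_nonempty; apply/implyP => /andP[].
Qed.

Lemma Emx_min n m (I : 'M[bool]_(n, m)) i j : I i j ->
  exists i', exists j', Emx I i' j' /\ Defs.interval I i' j' \subset Defs.interval I i j.
Proof.
move=> Iij.
pose P := fun p : 'I_n * 'I_m =>
  (Defs.interval I p.1 p.2 != set0) && (Defs.interval I p.1 p.2 \subset Defs.interval I i j).
have P0 : P (i, j) by rewrite /P /= interval_nonempty Iij subxx.
case: (arg_minnP (fun p => #|Defs.interval I p.1 p.2|) P0) => [[i' j']] /andP[ne sub] hmin.
exists i', j'; split=> //; rewrite Emx_entry ne /=.
apply/forallP => i''; apply/forallP => j''; apply/implyP => ne''.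
apply/negP => pr.
have := hmin (i'', j''); rewrite /P /= ne'' (subset_trans (proper_sub pr) sub).
move=> /(_ isT); rewrite leqNgt (proper_card pr) //.
Qed.

Lemma bprod_le n m (I : 'M[bool]_(n, m)) (F : {set concept n m}) :
  F \subset concepts I -> mxle (bprod (AF F) (BF F)) I.
Proof.
move=> /subsetP FI i j; apply/implyP; rewrite bprod_entry => /exists_inP[c cF /andP[h1 h2]].
exact: concept_entry (FI _ cF) h1 h2.
Qed.

Lemma mxle_eq n m (A B : 'M[bool]_(n, m)) : mxle A B -> mxle B A -> A = B.
Proof.
move=> h1 h2; apply/matrixP => i j; move: (h1 i j) (h2 i j).
by case: (A i j); case: (B i j).
Qed.

Lemma Emx_covers n m (I : 'M[bool]_(n, m)) : covers_all I (Emx I).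
Proof.
move=> F FI hE; apply: mxle_eq; last exact: bprod_le.
move=> i j; apply/implyP => Iij.
have [i' [j' [E' sub]]] := Emx_min Iij.
have := hE i' j'; rewrite E' /= bprod_entry => /exists_inP[c cF /andP[h1 h2]].
have : c \in Defs.interval I i' j'.
  by rewrite in_interval h1 h2 (subsetP FI _ cF).
move=> /(subsetP sub); rewrite in_interval => /and3P[_ h3 h4].
by rewrite bprod_entry; apply/exists_inP; exists c => //; rewrite h3 h4.
Qed.

Lemma Emx_least n m (I : 'M[bool]_(n, m)) : clarified I ->
  forall J, mxle J I -> covers_all I J -> mxle (Emx I) J.
Proof.
move=> [clr clc] J JI cov i j; apply/implyP => Eij.
apply/negPn/negP => nJ.
have Iij : I i j by move: (Emx_le I i j); rewrite Eij.
move: Eij; rewrite Emx_entry => /andP[_ /forallP hmin].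
pose F := [set c in concepts I | c \notin Defs.interval I i j].
have FI : F \subset concepts I by apply/subsetP => c; rewrite inE => /andP[].
have := cov F FI.
have cJ : mxle J (bprod (AF F) (BF F)).
  move=> i' j'; apply/implyP => Jij'.
  have Iij' : I i' j' by move: (JI i' j'); rewrite Jij'.
  case sub: (Defs.interval I i' j' \subset Defs.interval I i j); last first.
    move/negbT: sub => /subsetPn [c cin cout].
    rewrite bprod_entry; apply/exists_inP; exists c.
      by rewrite inE cout; move: cin; rewrite in_interval => /and3P[-> _ _].
    by move: cin; rewrite in_interval => /and3P[_ -> ->].
  have : ~~ (Defs.interval I i' j' \proper Defs.interval I i j).
    by move: (hmin i') => /forallP /(_ j') /implyP; apply; rewrite interval_nonempty.
  rewrite /proper sub /= negbK => sub'.
  have ei : i' = i.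
    apply: clr => k.
    have g1 : gamma I i' \in Defs.interval I i j.
      apply: (subsetP sub); rewrite in_interval gamma_concept /=.
      rewrite (subsetP (sub_down_up I [set i'])) ?inE ?eqxx //=.
      by apply/forall_inP => k'; rewrite inE => /eqP ->.
    have g2 : gamma I i \in Defs.interval I i' j'.
      apply: (subsetP sub'); rewrite in_interval gamma_concept /=.
      rewrite (subsetP (sub_down_up I [set i])) ?inE ?eqxx //=.
      by apply/forall_inP => k'; rewrite inE => /eqP ->.
    move: g1 g2; rewrite !in_interval /= => /and3P[_ + _] /and3P[_ + _].
    rewrite !inE => /forall_inP h1 /forall_inP h2.
    apply/idP/idP => hk.
      by apply: h1; rewrite inE; apply/forall_inP => x; rewrite inE => /eqP ->.
    by apply: h2; rewrite inE; apply/forall_inP => x; rewrite inE => /eqP ->.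
  have ej : j' = j.
    apply: clc => k.
    have g1 : mu I j' \in Defs.interval I i j.
      apply: (subsetP sub); rewrite in_interval mu_concept /=.
      rewrite (subsetP (sub_up_down I [set j'])) ?inE ?eqxx ?andbT //=.
      by apply/forall_inP => k'; rewrite inE => /eqP ->.
    have g2 : mu I j \in Defs.interval I i' j'.
      apply: (subsetP sub'); rewrite in_interval mu_concept /=.
      rewrite (subsetP (sub_up_down I [set j])) ?inE ?eqxx ?andbT //=.
      by apply/forall_inP => k'; rewrite inE => /eqP ->.
    move: g1 g2; rewrite !in_interval /= => /and3P[_ _ +] /and3P[_ _ +].
    rewrite !inE => /forall_inP h1 /forall_inP h2.
    apply/idP/idP => hk.
      by apply: h1; rewrite inE; apply/forall_inP => x; rewrite inE => /eqP ->.
    by apply: h2; rewrite inE; apply/forall_inP => x; rewrite inE => /eqP ->.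
  by move: Jij'; rewrite ei ej (negbTE nJ).
move=> /(_ cJ) /matrixP /(_ i j); rewrite Iij bprod_entry => /esym /exists_inP[c].
rewrite inE => /andP[cC cout] /andP[h1 h2].
by move: cout; rewrite in_interval cC h1 h2.
Qed.

Theorem theorem2 (n m : nat) (I : 'M[bool]_(n, m)) :
  clarified I ->
  essential_part I (Emx I) /\
  (forall J, essential_part I J -> J = Emx I) /\
  mxle (Emx I) I /\
  covers_all I (Emx I) /\
  (forall J, mxle J I -> covers_all I J -> mxle (Emx I) J).
Proof.
move=> cl.
have hl := Emx_least cl.
split; [|split; [|split; [exact: Emx_le | split; [exact: Emx_covers | exact: hl]]]].
  split; first exact: Emx_le.
  split; first exact: Emx_covers.
  by move=> J' J'I cov le; apply: mxle_eq => //; apply: hl.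
move=> J [JI [cov hmin]].
by apply/esym/hmin; [exact: Emx_le | exact: Emx_covers | exact: hl].
Qed.
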